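(* Let $\gamma\ge0$ be an integer. Then $$\omega_m^2C_{\gamma\gamma\gamma\gamma}-2\omega_\gamma^2C_{\gamma\gamma mm}\neq0\quad\text{for all integers } m\ge2\gamma+1,$$ and $D_{\gamma n}\ne0$ for all $n\in\{0,1,\dots,\gamma-1\}$, where $$D_{\gamma n}=\left[\omega_n^2C_{\gamma\gamma\gamma\gamma}-2\omega_\gamma^2C_{\gamma\gamma nn}\right]\left[\omega_{2\gamma-n}^2C_{\gamma\gamma\gamma\gamma}-2\omega_\gamma^2C_{\gamma,\gamma,2\gamma-n,2\gamma-n}\right]-\left[\omega_\gamma^2C_{\gamma,2\gamma-n,\gamma,n}\right]^2.$$
   Context: $\omega_n=n+1$ and $C_{ijkm}=\frac{2}{\pi}\int_{-1}^1U_i(y)U_j(y)U_k(y)U_m(y)\sqrt{1-y^2}\,dy$, where $U_n$ is the Chebyshev polynomial of the second kind of degree $n$ (equivalently $C_{ijkm}=\frac2\pi\int_0^\pi e_ie_je_ke_m\sin^2x\,dx$ with $e_n(x)=U_n(\cos x)$). *)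

(* Defs.v *)
From Stdlib Require Import Reals.
From Coquelicot Require Import Coquelicot.
Open Scope R_scope.

Fixpoint chebU (n : nat) (y : R) : R :=
  match n with
  | O => 1
  | S p => match p with
           | O => 2 * y
           | S q => 2 * y * chebU p y - chebU q y
           end
  end.

Definition omega (n : nat) : R := INR n + 1.

Definition Cc (i j k m : nat) : R :=
  2 / PI * RInt (fun y => chebU i y * chebU j y * chebU k y * chebU m y
                          * sqrt (1 - y ^ 2)) (-1) 1.

Definition Dgn (g n : nat) : R :=
  (omega n ^ 2 * Cc g g g g - 2 * omega g ^ 2 * Cc g g n n)
  * (omega (2 * g - n) ^ 2 * Cc g g g g
     - 2 * omega g ^ 2 * Cc g g (2 * g - n) (2 * g - n))
  - (omega g ^ 2 * Cc g (2 * g - n) g n) ^ 2.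

(* Main.v *)
Require Import Defs.
From Stdlib Require Import Reals Lra Lia.
From Coquelicot Require Import Coquelicot.
Open Scope R_scope.

Lemma chebU_SS n y : chebU (S (S n)) y = 2 * y * chebU (S n) y - chebU n y.
Proof. reflexivity. Qed.

Lemma chebU_cont n y : continuous (chebU n) y.
Proof.
  assert (H : forall n, continuous (chebU n) y /\ continuous (chebU (S n)) y).
  { induction n0 as [|n0 [H1 H2]].
    - split.
      + apply continuous_const.
      + apply (ex_derive_continuous (fun y => 2 * y)). auto_derive. auto.
    - split; [exact H2|].
      change (continuous (fun y => 2 * y * chebU (S n0) y - chebU n0 y) y).
      apply (continuous_minus (fun y => 2 * y * chebU (S n0) y) (chebU n0)); auto.
      apply (continuous_mult (fun y => 2 * y) (chebU (S n0))); auto.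
      apply (ex_derive_continuous (fun y => 2 * y)). auto_derive. auto. }
  apply H.
Qed.

Lemma chebU_sin n x : chebU n (cos x) * sin x = sin (INR (S n) * x).
Proof.
  assert (H : forall n, chebU n (cos x) * sin x = sin (INR (S n) * x) /\
                        chebU (S n) (cos x) * sin x = sin (INR (S (S n)) * x)).
  { induction n0 as [|n0 [H1 H2]].
    - simpl. split. rewrite !Rmult_1_l; reflexivity.
      replace ((1+1)*x) with (x + x) by ring. rewrite sin_plus. ring.
    - split; [exact H2|].
      rewrite chebU_SS.
      replace ((2 * cos x * chebU (S n0) (cos x) - chebU n0 (cos x)) * sin x)
        with (2 * cos x * (chebU (S n0) (cos x) * sin x) - chebU n0 (cos x) * sin x) by ring.
      rewrite H1, H2.
      replace (INR (S (S (S n0))) * x) with (INR (S (S n0)) * x + x) by (rewrite !S_INR; ring).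
      replace (INR (S n0) * x) with (INR (S (S n0)) * x - x) by (rewrite !S_INR; ring).
      rewrite sin_plus, sin_minus. ring. }
  apply H.
Qed.

Lemma cheb_lin i : forall d y,
  chebU i y * chebU (i + d) y = sum_f_R0 (fun k => chebU (d + 2 * k) y) i.
Proof.
  assert (H : forall i, (forall d y, chebU i y * chebU (i + d) y = sum_f_R0 (fun k => chebU (d + 2 * k) y) i)
     /\ (forall d y, chebU (S i) y * chebU (S i + d) y = sum_f_R0 (fun k => chebU (d + 2 * k) y) (S i))).
  { induction i0 as [|i0 [H1 H2]].
    - split; intros d y.
      + simpl. rewrite Nat.add_0_r. ring.
      + simpl sum_f_R0. rewrite !Nat.add_0_r. replace (d + 2*1)%nat with (S (S d)) by lia.
        replace (d + 2)%nat with (S (S d)) by lia. rewrite chebU_SS. simpl. ring.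
    - split; [exact H2|]. intros d y.
      rewrite chebU_SS.
      replace (S (S i0) + d)%nat with (S (S (i0 + d))) by lia.
      assert (E: 2 * y * chebU (S (S (i0 + d))) y = chebU (S (S (S (i0 + d)))) y + chebU (S (i0 + d)) y)
        by (rewrite (chebU_SS (S (i0 + d))); ring).
      replace ((2 * y * chebU (S i0) y - chebU i0 y) * chebU (S (S (i0 + d))) y) with
        (chebU (S i0) y * (2 * y * chebU (S (S (i0 + d))) y) - chebU i0 y * chebU (S (S (i0 + d))) y) by ring.
      rewrite E.
      pose proof (H2 (d + 2)%nat y) as A1. pose proof (H2 d y) as A2. pose proof (H1 (d + 2)%nat y) as A3.
      replace (S i0 + (d + 2))%nat with (S (S (S (i0 + d)))) in A1 by lia.
      replace (S i0 + d)%nat with (S (i0 + d)) in A2 by lia.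
      replace (i0 + (d + 2))%nat with (S (S (i0 + d))) in A3 by lia.
      rewrite Rmult_plus_distr_l, A1, A2, A3.
      change (sum_f_R0 (fun k : nat => chebU (d + 2 + 2 * k) y) (S i0)) with
        (sum_f_R0 (fun k : nat => chebU (d + 2 + 2 * k) y) i0 + chebU (d + 2 + 2 * S i0) y).
      change (sum_f_R0 (fun k : nat => chebU (d + 2 * k) y) (S (S i0))) with
        (sum_f_R0 (fun k : nat => chebU (d + 2 * k) y) (S i0) + chebU (d + 2 * S (S i0)) y).
      replace (d + 2 + 2 * S i0)%nat with (d + 2 * S (S i0))%nat by lia.
      ring. }
  apply H.
Qed.

Lemma sin_int_PI (z : Z) : sin (IZR z * PI) = 0.
Proof. apply sin_eq_0_1. exists z. reflexivity. Qed.

Lemma sin_nat_PI (n : nat) : sin (INR n * PI) = 0.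
Proof. rewrite INR_IZR_INZ. apply sin_int_PI. Qed.

Lemma orth a b : is_RInt (fun x => sin (INR (S a) * x) * sin (INR (S b) * x)) 0 PI
   (if Nat.eqb a b then PI/2 else 0).
Proof.
  set (p := INR (S a)). set (q := INR (S b)).
  assert (Hp : 0 < p) by (apply lt_0_INR; lia).
  assert (Hq : 0 < q) by (apply lt_0_INR; lia).
  destruct (Nat.eqb_spec a b) as [<-|Hab].
  - fold p in q. subst q.
    set (F := fun x => x / 2 - sin (2 * p * x) / (4 * p)).
    replace (PI/2) with (minus (F PI) (F 0)).
    2:{ unfold F, minus, plus, opp; simpl.
        replace (2 * p * PI) with (INR (2 * S a) * PI) by (unfold p; rewrite mult_INR; simpl; ring).
        rewrite sin_nat_PI. rewrite Rmult_0_r, sin_0. field. lra. }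
    apply (is_RInt_derive (V := R_CompleteNormedModule) F).
    + intros x _. unfold F. auto_derive; [auto|].
      replace (2 * p * x) with (p * x + p * x) by ring. rewrite cos_plus.
      pose proof (sin2_cos2 (p * x)). unfold Rsqr in H. field_simplify; [|lra]. nra.
    + intros x _. apply (ex_derive_continuous (fun x => sin (p * x) * sin (p * x))). auto_derive. auto.
  - assert (Hpq : p - q <> 0).
    { unfold p, q. rewrite !S_INR. intro H. apply Hab. apply INR_eq. lra. }
    set (F := fun x => sin ((p - q) * x) / (2 * (p - q)) - sin ((p + q) * x) / (2 * (p + q))).
    assert (Hv : minus (F PI) (F 0) = 0).
    { unfold F, minus, plus, opp; simpl.
        replace ((p - q) * PI) with (IZR (Z.of_nat (S a) - Z.of_nat (S b)) * PI)
          by (unfold p, q; rewrite minus_IZR, <- !INR_IZR_INZ; ring).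
        replace ((p + q) * PI) with (INR (S a + S b) * PI) by (unfold p, q; rewrite plus_INR; ring).
        rewrite sin_int_PI, sin_nat_PI, !Rmult_0_r, sin_0. field. lra. }
    enough (HH : is_RInt (fun x => sin (p * x) * sin (q * x)) 0 PI (minus (F PI) (F 0)))
      by (rewrite Hv in HH; exact HH).
    apply (is_RInt_derive (V := R_CompleteNormedModule) F).
    + intros x _. unfold F. auto_derive; [auto|].
      replace ((p - q) * x) with (p * x - q * x) by ring.
      replace ((p + q) * x) with (p * x + q * x) by ring.
      rewrite cos_plus, cos_minus. field. lra.
    + intros x _. apply (ex_derive_continuous (fun x => sin (p * x) * sin (q * x))). auto_derive. auto.
Qed.

Lemma is_RInt_plus' (f g : R -> R) a b (u v w : R) : is_RInt f a b u -> is_RInt g a b v -> w = u + v ->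
  is_RInt (fun x => f x + g x) a b w.
Proof. intros H1 H2 ->. apply (is_RInt_plus f g a b u v H1 H2). Qed.

Lemma is_RInt_ext' (f g : R -> R) a b (u : R) : (forall x, f x = g x) -> is_RInt f a b u -> is_RInt g a b u.
Proof. intros H. apply is_RInt_ext. intros; auto. Qed.

Definition T c k x := sin (INR (S (c + 2 * k)) * x).
Definition G c A x := sum_f_R0 (fun k => T c k x) A.

Lemma L1 c k B : is_RInt (fun x => T c k x * G c B x) 0 PI (if Nat.leb k B then PI/2 else 0).
Proof.
  induction B as [|B IH].
  - pose proof (orth (c + 2 * k) (c + 2 * 0)) as H.
    replace (Nat.leb k 0) with (Nat.eqb (c + 2 * k) (c + 2 * 0)).
    + exact H.
    + destruct (Nat.eqb_spec (c + 2 * k) (c + 2 * 0)); destruct (Nat.leb_spec k 0); auto; lia.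
  - apply (is_RInt_ext' (fun x => T c k x * G c B x + T c k x * T c (S B) x)).
    { intros x. unfold G. simpl sum_f_R0. ring. }
    eapply is_RInt_plus'; [exact IH | apply (orth (c + 2 * k) (c + 2 * S B)) |].
    destruct (Nat.eqb_spec (c + 2 * k) (c + 2 * S B)); destruct (Nat.leb_spec k B);
      destruct (Nat.leb_spec k (S B)); try lia; ring.
Qed.

Lemma L2 c A B : is_RInt (fun x => G c A x * G c B x) 0 PI (PI/2 * INR (S (Nat.min A B))).
Proof.
  induction A as [|A IH].
  - apply (is_RInt_ext' (fun x => T c 0 x * G c B x)).
    { intros x. reflexivity. }
    replace (PI / 2 * INR (S (Nat.min 0 B))) with (if Nat.leb 0 B then PI/2 else 0)
      by (change (INR (S (Nat.min 0 B))) with 1; change (if Nat.leb 0 B then PI/2 else 0) with (PI/2); ring).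
    apply L1.
  - apply (is_RInt_ext' (fun x => G c A x * G c B x + T c (S A) x * G c B x)).
    { intros x. unfold G. simpl sum_f_R0. ring. }
    eapply is_RInt_plus'; [exact IH | apply L1 |].
    destruct (Nat.leb_spec (S A) B).
    + replace (Nat.min A B) with A by lia. replace (Nat.min (S A) B) with (S A) by lia.
      rewrite !S_INR. ring.
    + replace (Nat.min A B) with B by lia. replace (Nat.min (S A) B) with B by lia. ring.
Qed.

Lemma cov (P : R -> R) (HP : forall y, continuous P y) (v : R) :
  is_RInt (fun x => P (cos x) * sin x * sin x) 0 PI v ->
  RInt (fun y => P y * sqrt (1 - y ^ 2)) (-1) 1 = v.
Proof.
  intros Hv.
  set (f := fun y => P y * sqrt (1 - y ^ 2)).
  assert (Hf : forall y, continuous f y).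
  { intros y. unfold f. apply (continuous_mult P (fun y => sqrt (1 - y ^ 2))); auto.
    apply continuous_sqrt_comp. apply (ex_derive_continuous (fun y => 1 - y ^ 2)).
    auto_derive. auto. }
  assert (Hex : ex_RInt f 1 (-1)).
  { apply (ex_RInt_continuous (V := R_CompleteNormedModule)). intros; auto. }
  change (RInt f (-1) 1 = v).
  rewrite <- (opp_RInt_swap (V := R_CompleteNormedModule) f 1 (-1) Hex).
  rewrite <- cos_0 at 1. rewrite <- cos_PI.
  rewrite <- (RInt_comp f cos (fun x => - sin x) 0 PI).
  - rewrite (is_RInt_unique _ 0 PI (- v)).
    + unfold opp; simpl; ring.
    + apply (is_RInt_ext (fun y => opp (P (cos y) * sin y * sin y))).
      * intros x Hx. rewrite Rmin_left in Hx by (pose proof PI_RGT_0; lra).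
        rewrite Rmax_right in Hx by (pose proof PI_RGT_0; lra).
        unfold f, opp, scal; simpl. unfold mult; simpl.
        assert (Hs : 0 < sin x) by (apply sin_gt_0; lra).
        replace (1 - cos x ^ 2) with (sin x ^ 2) by (pose proof (sin2 x); unfold Rsqr in *; simpl; nra).
        replace (1 - cos x * (cos x * 1)) with (sin x ^ 2) by (pose proof (sin2 x); unfold Rsqr in *; simpl; nra). rewrite sqrt_pow2 by lra. ring.
      * apply (is_RInt_opp (V := R_NormedModule)). exact Hv.
  - intros; auto.
  - intros x _. split.
    + auto_derive; auto. ring.
    + apply (ex_derive_continuous (fun x => - sin x)). auto_derive. auto.
Qed.

Lemma sumU_sin c A x :
  sum_f_R0 (fun l => chebU (c + 2 * l) (cos x)) A * sin x = G c A x.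
Proof.
  induction A as [|A IH].
  - unfold G, T. simpl sum_f_R0. apply chebU_sin.
  - unfold G in *. rewrite !tech5, Rmult_plus_distr_r, IH. unfold T at 2.
    rewrite chebU_sin. reflexivity.
Qed.

Lemma Cc_eval i j k m c A B
  (H1 : forall y, chebU i y * chebU j y = sum_f_R0 (fun l => chebU (c + 2 * l) y) A)
  (H2 : forall y, chebU k y * chebU m y = sum_f_R0 (fun l => chebU (c + 2 * l) y) B) :
  Cc i j k m = INR (S (Nat.min A B)).
Proof.
  unfold Cc.
  assert (HP : forall y, continuous (fun y => chebU i y * chebU j y * chebU k y * chebU m y) y).
  { intros y.
    apply (continuous_mult (fun y => chebU i y * chebU j y * chebU k y) (chebU m)); [|apply chebU_cont].
    apply (continuous_mult (fun y => chebU i y * chebU j y) (chebU k)); [|apply chebU_cont].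
    apply (continuous_mult (chebU i) (chebU j)); apply chebU_cont. }
  rewrite (cov (fun y => chebU i y * chebU j y * chebU k y * chebU m y) HP (PI/2 * INR (S (Nat.min A B)))).
  - field. apply PI_neq0.
  - apply (is_RInt_ext' (fun x => G c A x * G c B x)); [|apply L2].
    intros x. rewrite <- !sumU_sin, <- H1, <- H2. ring.
Qed.

Theorem proposition7p2 (g : nat) :
  (forall m : nat, (2 * g + 1 <= m)%nat ->
     omega m ^ 2 * Cc g g g g - 2 * omega g ^ 2 * Cc g g m m <> 0)
  /\ (forall n : nat, (n < g)%nat -> Dgn g n <> 0).
Proof.
  assert (Hgg : Cc g g g g = INR g + 1).
  { rewrite (Cc_eval g g g g 0 g g).
    - rewrite Nat.min_id, S_INR. reflexivity.
    - intros y. rewrite <- cheb_lin, Nat.add_0_r. reflexivity.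
    - intros y. rewrite <- cheb_lin, Nat.add_0_r. reflexivity. }
  assert (Hg0 : 0 <= INR g) by apply pos_INR.
  split.
  - intros m Hm.
    assert (Hmm : Cc g g m m = INR g + 1).
    { rewrite (Cc_eval g g m m 0 g m).
      - rewrite Nat.min_l by lia. rewrite S_INR. reflexivity.
      - intros y. rewrite <- cheb_lin, Nat.add_0_r. reflexivity.
      - intros y. rewrite <- cheb_lin, Nat.add_0_r. reflexivity. }
    rewrite Hgg, Hmm. unfold omega.
    apply le_INR in Hm. rewrite plus_INR, mult_INR in Hm. simpl in Hm.
    intro H.
    assert (Hp : 0 < INR g + 1) by lra.
    assert (H' : (INR g + 1) * ((INR m + 1) ^ 2 - 2 * (INR g + 1) ^ 2) = 0) by (rewrite <- H; ring).
    apply Rmult_integral in H'. destruct H' as [H'|H']; [lra|].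
    assert (INR m + 1 >= 2 * (INR g + 1)) by lra. nra.
  - intros n Hn.
    assert (Hnn : Cc g g n n = INR n + 1).
    { rewrite (Cc_eval g g n n 0 g n).
      - rewrite Nat.min_r by lia. rewrite S_INR. reflexivity.
      - intros y. rewrite <- cheb_lin, Nat.add_0_r. reflexivity.
      - intros y. rewrite <- cheb_lin, Nat.add_0_r. reflexivity. }
    assert (Hpp : Cc g g (2 * g - n) (2 * g - n) = INR g + 1).
    { rewrite (Cc_eval g g (2 * g - n) (2 * g - n) 0 g (2 * g - n)).
      - rewrite Nat.min_l by lia. rewrite S_INR. reflexivity.
      - intros y. rewrite <- cheb_lin, Nat.add_0_r. reflexivity.
      - intros y. rewrite <- cheb_lin, Nat.add_0_r. reflexivity. }
    assert (Hx : Cc g (2 * g - n) g n = INR n + 1).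
    { rewrite (Cc_eval g (2 * g - n) g n (g - n) g n).
      - rewrite Nat.min_r by lia. rewrite S_INR. reflexivity.
      - intros y. rewrite <- cheb_lin. replace (g + (g - n))%nat with (2 * g - n)%nat by lia. reflexivity.
      - intros y. rewrite <- cheb_lin. replace (n + (g - n))%nat with g by lia. ring. }
    unfold Dgn. rewrite Hgg, Hnn, Hpp, Hx. unfold omega.
    rewrite minus_INR by lia. rewrite mult_INR. simpl (INR 2).
    apply lt_INR in Hn.
    assert (Hn0 : 0 <= INR n) by apply pos_INR.
    set (a := INR g + 1). set (b := INR n + 1).
    replace (INR g) with (a - 1) by (unfold a; ring).
    replace (INR n) with (b - 1) by (unfold b; ring).
    assert (Ha : 0 < a) by (unfold a; lra).
    assert (Hb : 0 < b) by (unfold b; lra).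
    assert (Hab : b < a) by (unfold a, b; lra).
    intro H.
    assert (H' : a * a * b * ((b - a) * (b - a) * (b - 4 * a)) = 0) by (rewrite <- H; ring).
    apply Rmult_integral in H'. destruct H' as [H'|H'].
    + apply Rmult_integral in H'. destruct H' as [H'|H']; [|lra].
      apply Rmult_integral in H'. destruct H' as [H'|H']; lra.
    + apply Rmult_integral in H'. destruct H' as [H'|H']; [|lra].
      apply Rmult_integral in H'. destruct H' as [H'|H']; lra.
Qed.
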